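(* Let $E$ be a complex vector space of dimension $n$ with coordinates $(z_1,\dots,z_n)$ and $\omega=\sum_{j=1}^n i\,dz_j\wedge d\bar z_j$. Let $p,q$ be integers with $q\ge2$ and $p+q\le n$, and let $\alpha\in V^{p,q-1}$. Assume that for every $\varphi\in V^{0,1}$ there exists $\beta\in V^{p-1,q-1}$ with $\alpha\wedge\varphi=\omega\wedge\beta$. Then there exists $\gamma\in V^{p-1,q-2}$ with $\alpha=\omega\wedge\gamma$.
   Context: $V^{p,q}:=\bigwedge^pE\otimes\bigwedge^q\overline E$ is the space of $(p,q)$-forms on $E$, with $V^{p,q}:=0$ unless $0\le p,q\le n$. *)

(* Defs.v *)
From HB Require Import structures.
From mathcomp Require Import all_boot all_order all_algebra.
Set Implicit Arguments. Unset Strict Implicit. Unset Printing Implicit Defensive.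
Import Order.TTheory GRing.Theory Num.Theory.
Local Open Scope ring_scope.

(* A form: coefficient of dz_I /\ dzbar_J for each pair (I, J). *)
Definition cform (n : nat) (C : numClosedFieldType) :=
  {ffun {set 'I_n} * {set 'I_n} -> C}.

(* V^{p,q}: only bidegree (p,q) coefficients are nonzero; degrees are
   integers, so V^{p,q} = 0 automatically when p < 0 or q < 0 (or > n). *)
Definition in_V (n : nat) (C : numClosedFieldType) (p q : int) (f : cform n C) :=
  forall I J : {set 'I_n}, f (I, J) != 0 ->
    (#|I|%:Z = p) /\ (#|J|%:Z = q).

Definition ninv (n : nat) (A B : {set 'I_n}) : nat :=
  #|[set ab : 'I_n * 'I_n | [&& ab.1 \in A, ab.2 \in B & (ab.2 < ab.1)%N]]|.

(* sign of  dz_I1 /\ dzb_J1 /\ dz_I2 /\ dzb_J2 = sign * dz_(I1 u I2) /\ dzb_(J1 u J2) *)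
Definition wsign (n : nat) (C : numClosedFieldType) (I1 J1 I2 J2 : {set 'I_n}) : C :=
  (-1) ^+ (#|J1| * #|I2| + ninv I1 I2 + ninv J1 J2).

Definition wedge (n : nat) (C : numClosedFieldType) (f g : cform n C) : cform n C :=
  [ffun IJ : {set 'I_n} * {set 'I_n} =>
     \sum_(I1 : {set 'I_n} | I1 \subset IJ.1)
       \sum_(J1 : {set 'I_n} | J1 \subset IJ.2)
         wsign C I1 J1 (IJ.1 :\: I1) (IJ.2 :\: J1)
           * f (I1, J1) * g (IJ.1 :\: I1, IJ.2 :\: J1)].

Definition omega (n : nat) (C : numClosedFieldType) : cform n C :=
  [ffun IJ : {set 'I_n} * {set 'I_n} =>
     if (#|IJ.1| == 1)%N && (IJ.1 == IJ.2) then 'i else 0].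

(* Main.v *)
Require Import Defs.
From mathcomp Require Import all_boot all_order all_algebra.
From Stdlib Require Import Lia IndefiniteDescription.
Set Implicit Arguments. Unset Strict Implicit. Unset Printing Implicit Defensive.
Import Order.TTheory GRing.Theory Num.Theory.
Local Open Scope ring_scope.

Section S.
Variable C : numClosedFieldType.
Variable n : nat.
Implicit Types (I J X Y K A B : {set 'I_n}) (j k : 'I_n).

Lemma ninvUr A B1 B2 : [disjoint B1 & B2] -> ninv A (B1 :|: B2) = (ninv A B1 + ninv A B2)%N.
Proof.
move=> /disjoint_setI0 hd; rewrite /ninv -cardsUI.
set S1 := [set ab | [&& _, _ \in B1 & _]]; set S2 := [set ab | [&& _, _ \in B2 & _]].
have -> : S1 :&: S2 = set0.
  apply/setP => -[x y]; rewrite !inE /=.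
  have : y \in B1 :&: B2 = false by rewrite hd inE.
  by rewrite inE; case: (y \in B1); case: (y \in B2); rewrite ?andbF.
rewrite cards0 addn0; apply: eq_card => -[x y]; rewrite !inE /=.
by case: (x \in A); case: (y \in B1); case: (y \in B2); case: (y < x)%N.
Qed.

Lemma ninvUl A1 A2 B : [disjoint A1 & A2] -> ninv (A1 :|: A2) B = (ninv A1 B + ninv A2 B)%N.
Proof.
move=> /disjoint_setI0 hd; rewrite /ninv -cardsUI.
set S1 := [set ab | [&& _ \in A1, _ & _]]; set S2 := [set ab | [&& _ \in A2, _ & _]].
have -> : S1 :&: S2 = set0.
  apply/setP => -[x y]; rewrite !inE /=.
  have : x \in A1 :&: A2 = false by rewrite hd inE.
  by rewrite inE; case: (x \in A1); case: (x \in A2); rewrite ?andbF.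
rewrite cards0 addn0; apply: eq_card => -[x y]; rewrite !inE /=.
by case: (x \in A1); case: (x \in A2); case: (y \in B); case: (y < x)%N.
Qed.

Lemma ninv11 j k : ninv [set j] [set k] = (k < j)%N.
Proof.
rewrite /ninv; case: ltnP => h.
  rewrite (_ : [set ab | _] = [set (j, k)]) ?cards1 //.
  apply/setP => -[x y]; rewrite !inE /= xpair_eqE.
  by case: (x =P j) => [->|]; case: (y =P k) => [->|] //=; rewrite h.
rewrite (_ : [set ab | _] = set0) ?cards0 //.
apply/setP => -[x y]; rewrite !inE /=.
case: (x =P j) => [->|]; case: (y =P k) => [->|] //=; rewrite ltnNge h //.
Qed.

Lemma ninvU1r j k X : k \notin X -> ninv [set j] (k |: X) = ((k < j) + ninv [set j] X)%N.
Proof. by move=> h; rewrite ninvUr ?disjoints1 // ninv11. Qed.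

Lemma ninvU1l j k X : j \notin X -> ninv (j |: X) [set k] = ((k < j) + ninv X [set k])%N.
Proof. by move=> h; rewrite ninvUl ?disjoints1 // ninv11. Qed.

Lemma sign_even (a m : nat) : (-1) ^+ (a + m.*2)%N = (-1) ^+ a :> C.
Proof. by rewrite -signr_odd oddD odd_double addbF signr_odd. Qed.

Definition sg j I J : C :=
  (-1) ^+ (#|I :\ j| + ninv [set j] (I :\ j) + ninv [set j] (J :\ j))%N.

Lemma sgK j I J : sg j I J * sg j I J = 1.
Proof. by rewrite /sg -exprD addnn -signr_odd odd_double. Qed.

Lemma setU1D1 j k X : j != k -> (k |: X) :\ j = k |: (X :\ j).
Proof.
move=> h; apply/setP => x; rewrite !inE.
case: (x =P k) => [->|] //=; by rewrite eq_sym h.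
Qed.

Lemma sg_comm j k X Y : j \notin X -> j \notin Y -> k \notin X -> k \notin Y -> j != k ->
  sg k (k |: (j |: X)) (k |: (j |: Y)) * sg j (k |: (j |: X)) (k |: (j |: Y))
  = sg j (j |: X) (j |: Y) * sg k (k |: X) (k |: Y).
Proof.
move=> jX jY kX kY jk.
have kjX : k \notin j |: X by rewrite !inE negb_or eq_sym jk.
have kjY : k \notin j |: Y by rewrite !inE negb_or eq_sym jk.
rewrite /sg (setU1K kjX) (setU1K kjY) [(j |: X) :\ j]setU1K // [(j |: Y) :\ j]setU1K // [(k |: X) :\ k]setU1K // [(k |: Y) :\ k]setU1K //.
rewrite [(k |: (j |: X)) :\ j]setU1D1 // [(k |: (j |: Y)) :\ j]setU1D1 //.
rewrite [(j |: X) :\ j]setU1K // [(j |: Y) :\ j]setU1K //.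
rewrite [ninv [set k] (j |: X)]ninvU1r // [ninv [set k] (j |: Y)]ninvU1r //.
rewrite [ninv [set j] (k |: X)]ninvU1r // [ninv [set j] (k |: Y)]ninvU1r //.
rewrite [#|j |: X|]cardsU1 [#|k |: X|]cardsU1 jX kX.
rewrite -!exprD.
set x1 := ninv [set j] X; set x2 := ninv [set j] Y; set x3 := ninv [set k] X; set x4 := ninv [set k] Y.
rewrite -[X in _ = X](sign_even _ (1 + (j < k) + (k < j))); congr (_ ^+ _).
change (nat_of_bool true) with 1%N; set cX := #|X|; set b1 := (j < k)%N; set b2 := (k < j)%N; rewrite -!addnn -!plusE; clearbody x1 x2 x3 x4 cX b1 b2; lia.
Qed.


Definition avoid K I J := forall x, x \in K -> (x \notin I) && (x \notin J).

Definition Lop (e : {set 'I_n} -> {set 'I_n} -> C) I J : C :=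
  \sum_(j in I :&: J) sg j I J * e (I :\ j) (J :\ j).
Definition Lam K (e : {set 'I_n} -> {set 'I_n} -> C) I J : C :=
  \sum_(k in ~: (I :|: J :|: K)) sg k (k |: I) (k |: J) * e (k |: I) (k |: J).

Lemma comm K e I J : avoid K I J ->
  Lop (Lam K e) I J = Lam K (Lop e) I J - (#|~: (I :|: J :|: K)|%:R - #|I :&: J|%:R) * e I J.
Proof.
move=> hav.
have h1 : forall k, k \in ~: (I :|: J :|: K) ->
  sg k (k |: I) (k |: J) * (\sum_(j in (k |: I) :&: (k |: J)) sg j (k |: I) (k |: J) * e ((k |: I) :\ j) ((k |: J) :\ j))
  = e I J + \sum_(j in I :&: J) sg k (k |: I) (k |: J) * sg j (k |: I) (k |: J) * e (k |: (I :\ j)) (k |: (J :\ j)).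
  move=> k; rewrite !inE !negb_or => /andP[/andP[kI kJ] kK].
  rewrite -setUIr (bigD1 k) ?setU11 //= (setU1K kI) (setU1K kJ) mulrDr mulrA sgK mul1r; congr (_ + _).
  rewrite mulr_sumr; apply: eq_big => [j | j].
    rewrite !inE; case: (j =P k) => [->|] /=; first by rewrite (negbTE kI).
    by rewrite andbT.
  rewrite !inE => /andP[_ jk]; rewrite !setU1D1 // mulrA //.
have h2 : forall j, j \in I :&: J ->
  sg j I J * (\sum_(k in ~: ((I :\ j) :|: (J :\ j) :|: K)) sg k (k |: (I :\ j)) (k |: (J :\ j)) * e (k |: (I :\ j)) (k |: (J :\ j)))
  = e I J + \sum_(k in ~: (I :|: J :|: K)) sg j I J * sg k (k |: (I :\ j)) (k |: (J :\ j)) * e (k |: (I :\ j)) (k |: (J :\ j)).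
  move=> j; rewrite inE => /andP[jI jJ].
  have jK : j \notin K by apply/negP => /hav; rewrite jI.
  rewrite (bigD1 j); last by rewrite !inE !negb_or eqxx /= jK.
  rewrite (setD1K jI) (setD1K jJ) mulrDr mulrA sgK mul1r; congr (_ + _).
  rewrite mulr_sumr; apply: eq_big => [k | k _]; last by rewrite mulrA.
  rewrite !inE !negb_or; case: (k =P j) => [->|] /=; first by rewrite jI andbF.
  by move=> _; rewrite andbT.
rewrite /Lop /Lam (eq_bigr _ h1) (eq_bigr _ h2) !big_split /= !sumr_const.
set S1 := \sum_(k in _) \sum_(j in _) _; set S2 := \sum_(j in _) \sum_(k in _) _.
have -> : S1 = S2.
  rewrite /S1 /S2 exchange_big /=; apply: eq_bigr => k.
  rewrite !inE !negb_or => /andP[/andP[kI kJ] kK].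
  apply: eq_bigr => j; rewrite inE => /andP[jI jJ].
  have jk : j != k by apply/eqP => ejk; move: kI; rewrite -ejk jI.
  have := sg_comm (X := I :\ j) (Y := J :\ j) (j := j) (k := k).
  have kIj : k \notin I :\ j by rewrite inE negb_and kI orbT.
  have kJj : k \notin J :\ j by rewrite inE negb_and kJ orbT.
  rewrite !setD11 (setD1K jI) (setD1K jJ) => /(_ isT isT kIj kJj jk) ->.
  by [].
rewrite -(mulr_natl (e I J) #|I :&: J|) -(mulr_natl (e I J) #|~: (I :|: J :|: K)|) mulrBl opprB. rewrite [in RHS]addrC addrA. by rewrite [in RHS]addrAC addrK addrC.
Qed.


Lemma avoidU1 K I J k : avoid K I J -> k \notin K -> avoid K (k |: I) (k |: J).
Proof.
move=> hav kK x xK; have := hav x xK; rewrite !inE.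
have -> : (x == k) = false by apply/eqP => exk; move: kK; rewrite -exk xK.
by [].
Qed.

Lemma avoidD1 K I J j : avoid K I J -> avoid K (I :\ j) (J :\ j).
Proof.
move=> hav x xK; have := hav x xK; rewrite !inE !negb_and.
by case/andP => -> ->; rewrite !orbT.
Qed.

Lemma card_avoid K I J : avoid K I J ->
  (#|~: (I :|: J :|: K)| + #|I| + #|J| + #|K| = n + #|I :&: J|)%N.
Proof.
move=> hav.
have h0 : (I :|: J) :&: K = set0.
  apply/setP => x; rewrite !inE; case xK: (x \in K); last by rewrite andbF.
  by have := hav x xK; case/andP => /negbTE -> /negbTE ->.
have h1 := cardsUI (I :|: J) K; rewrite h0 cards0 addn0 in h1.
have h2 := cardsUI I J.
have h3 := cardsC (I :|: J :|: K); rewrite card_ord in h3.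
set x1 := #|~: _| in h3 *; set x2 := #|I :|: J :|: K| in h1 h3.
set x3 := #|I :|: J| in h1 h2; set x4 := #|I :&: J| in h2 *.
set x5 := #|I| in h2 *; set x6 := #|J| in h2 *; set x7 := #|K| in h1 *.
clearbody x1 x2 x3 x4 x5 x6 x7.
move: h1 h2 h3; rewrite -!plusE => h1 h2 h3; lia.
Qed.

Lemma lef K a b e : (a + b + 1 + #|K| <= n)%N ->
  (forall I J, e I J != 0 -> #|I| = a /\ #|J| = b) ->
  (forall I J, avoid K I J -> Lop e I J = 0) ->
  forall I J, avoid K I J -> e I J = 0.
Proof.
move=> hdeg hsupp hL.
pose g r := iter r (Lam K) e.
have gS r : g r.+1 = Lam K (g r) by [].
have supp : forall r I J, g r I J != 0 -> (#|I| + r = a /\ #|J| + r = b)%N.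
  elim=> [|r IH] I J; first by move/hsupp => [-> ->]; rewrite !addn0.
  rewrite gS /Lam => hnz.
  case: (pickP (fun k => (k \in ~: (I :|: J :|: K)) && (g r (k |: I) (k |: J) != 0))).
    move=> k /andP[]; rewrite !inE !negb_or => /andP[/andP[kI kJ] _] /IH.
    by rewrite !cardsU1 kI kJ /= !add1n !addSn !addnS.
  move=> hnone; move: hnz; rewrite big1 ?eqxx // => k hk.
  by have := hnone k; rewrite hk /= => /negbFE/eqP ->; rewrite mulr0.
pose m0 := (n - #|K| - (a + b))%N.
have m0pos : (0 < m0)%N.
  rewrite /m0; move: hdeg; set x := #|K|; clearbody x; rewrite -!plusE -!minusE => h.
  apply/ssrnat.ltP; move/ssrnat.leP: h; lia.
pose fix c r := if r is r'.+1 then (c r' + (m0 + r'.*2))%N else 0%N.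
have Q : forall r I J, avoid K I J -> Lop (g r) I J = - (c r)%:R * g r.-1 I J.
  elim=> [|r IH] I J hav; first by rewrite hL // /= oppr0 mul0r.
  rewrite gS comm //.
  have -> : Lam K (Lop (g r)) I J = - (c r)%:R * g r I J.
    rewrite /Lam.
    rewrite (eq_bigr (fun k => - (c r)%:R * (sg k (k |: I) (k |: J) * g r.-1 (k |: I) (k |: J)))).
      rewrite -mulr_sumr; case: r IH => [|r] IH; first by rewrite /= oppr0 !mul0r.
      by congr (_ * _).
    move=> k; rewrite !inE !negb_or => /andP[_ kK].
    rewrite IH; [exact: mulrCA | exact: avoidU1].
  have -> : (#|~: (I :|: J :|: K)|%:R - #|I :&: J|%:R) * g r I J = (m0 + r.*2)%:R * g r I J.
    have [->|hnz] := eqVneq (g r I J) 0; first by rewrite !mulr0.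
    have [hI hJ] := supp _ _ _ hnz.
    congr (_ * _); have h := card_avoid hav.
    rewrite -natrB; last first.
      move: h hdeg hI hJ; rewrite /m0.
      set x1 := #|~: _|; set x4 := #|I :&: J|; set x5 := #|I|; set x6 := #|J|; set x7 := #|K|.
      clearbody x1 x4 x5 x6 x7; rewrite -!plusE => h1 h2 h3 h4; apply/ssrnat.leP; move/ssrnat.leP: h2; lia.
    congr (_ %:R).
    move: h hdeg hI hJ; rewrite /m0.
    set x1 := #|~: _|; set x4 := #|I :&: J|; set x5 := #|I|; set x6 := #|J|; set x7 := #|K|.
    clearbody x1 x4 x5 x6 x7; rewrite -!plusE -!minusE -!addnn -!plusE => h1 h2 h3 h4; move/ssrnat.leP: h2; lia.
  by rewrite /= -mulrBl -opprD -natrD.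
have cpos r : (c r.+1)%:R != 0 :> C.
  have m0n : (m0 == 0%N) = false by apply/negbTE; rewrite -lt0n.
  by rewrite pnatr_eq0 /= !addn_eq0 m0n andbF.
have down : forall i r, (r + i = a.+1)%N -> forall I J, avoid K I J -> g r I J = 0.
  elim=> [|i IH] r hri I J hav.
    rewrite addn0 in hri; apply/eqP; apply/negPn/negP => /supp [h _].
    by move: h; rewrite hri addnS => /eqP; rewrite -{2}(add0n a) -addSn eqn_add2r.
  have := Q r.+1 I J hav; rewrite /Lop big1.
    move/esym/eqP; rewrite /= mulNr oppr_eq0 mulf_eq0 (negbTE (cpos r)) /= => /eqP.
    by [].
  move=> j _; rewrite (IH r.+1) ?mulr0 //; [by rewrite addSn -addnS | exact: avoidD1].
by move=> I J hav; apply: (down a.+1 0%N) => //.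
Qed.


Lemma ninv0r A : ninv A set0 = 0%N.
Proof.
rewrite /ninv (_ : [set ab | _] = set0) ?cards0 //.
by apply/setP => -[x y]; rewrite !inE /= andbF.
Qed.

Lemma wedge_omega (g : cform n C) I J :
  wedge (omega n C) g (I, J) = 'i * Lop (fun X Y => g (X, Y)) I J.
Proof.
rewrite ffunE /= /Lop mulr_sumr.
rewrite (eq_bigr (fun I1 => if (#|I1| == 1%N) && (I1 \subset J) then
   wsign C I1 I1 (I :\: I1) (J :\: I1) * 'i * g (I :\: I1, J :\: I1) else 0)); last first.
  move=> I1 _; case h: ((#|I1| == 1%N) && (I1 \subset J)).
    case/andP: h => h1 h2.
    rewrite (bigD1 I1) //= ffunE /= h1 eqxx /= big1 ?addr0 // => J1 /andP[_ hJ1].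
    by rewrite ffunE /= [I1 == J1]eq_sym (negbTE hJ1) andbF mulr0 mul0r.
  rewrite big1 // => J1 hJ1; rewrite ffunE /=.
  case h1: (#|I1| == 1%N); case h2: (I1 == J1) => //=; rewrite ?mulr0 ?mul0r //.
  by move: h; rewrite h1 (eqP h2) hJ1.
rewrite -big_mkcondr (eq_bigl (fun X => X \in [set [set j] | j in I :&: J])); last first.
  move=> X; apply/idP/imsetP.
    case/andP => hXI /andP[/cards1P [x hx] hXJ]; exists x => //.
    by move: hXI hXJ; rewrite hx !sub1set inE => -> ->.
  by case=> x; rewrite inE => /andP[xI xJ] ->; rewrite !sub1set cards1 xI xJ.
rewrite big_imset /=; last by move=> x y _ _; apply: set1_inj.
apply: eq_bigr => x _.
by rewrite /wsign /sg cards1 mul1n mulrCA mulrA.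
Qed.


Definition phik k : cform n C :=
  [ffun IJ : {set 'I_n} * {set 'I_n} => if (IJ.1 == set0) && (IJ.2 == [set k]) then 1 else 0].

Lemma phik_in k : in_V 0 1 (phik k).
Proof.
move=> I J; rewrite ffunE /=; case: (I =P set0) => [->|]; case: (J =P [set k]) => [->|] //=.
by rewrite cards0 cards1.
by rewrite eqxx.
by rewrite eqxx.
by rewrite eqxx.
Qed.

Lemma setU1D_eq k J J1 : k \notin J -> J1 \subset k |: J -> (k |: J) :\: J1 = [set k] -> J1 = J.
Proof.
move=> kJ hs he; apply/setP => x.
move/setP: he => /(_ x); rewrite !inE.
case: (x =P k) => [->|xk] /=.
  by rewrite (negbTE kJ) andbT => /negbTE.
move: (subsetP hs x); rewrite !inE.
case xJ1: (x \in J1); case xJ: (x \in J) => //=.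
by move=> /(_ isT) /orP[/eqP //|].
Qed.

Lemma wedge_phik (a : cform n C) k I J : k \notin J ->
  wedge a (phik k) (I, k |: J) = (-1) ^+ (ninv J [set k]) * a (I, J).
Proof.
move=> kJ; rewrite ffunE /= (bigD1 I) //= [X in _ + X]big1 ?addr0; last first.
  move=> I1 /andP[hs hne]; apply: big1 => J1 _.
  rewrite ffunE /= (_ : (I :\: I1 == set0) = false) ?mulr0 //.
  by rewrite setD_eq0; apply/negbTE; apply: contra hne => h; rewrite eqEsubset h hs.
rewrite (bigD1 J) ?subsetUr //= [X in _ + X]big1 ?addr0; last first.
  move=> J1 /andP[hs hne]; rewrite ffunE /=.
  case: ((k |: J) :\: J1 =P [set k]) => [he|]; last by rewrite andbF mulr0.
  by move: hne; rewrite (setU1D_eq kJ hs he) eqxx.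
rewrite ffunE /= setDv eqxx /=.
have -> : (k |: J) :\: J = [set k].
  apply/setP => x; rewrite !inE; case: (x =P k) => [->|] /=; first by rewrite (negbTE kJ).
  by move=> _; case: (x \in J).
by rewrite eqxx mulr1 /wsign cards0 muln0 ninv0r.
Qed.


Lemma zsub1 (x y : nat) : (x%:Z == y%:Z - 1) = (x.+1 == y)%N.
Proof. rewrite eq_sym subr_eq addrC -intS eqz_nat eq_sym //. Qed.
Lemma zsub2 (x y : nat) : (x%:Z == y%:Z - 2) = (x.+2 == y)%N.
Proof. rewrite eq_sym subr_eq addrC. rewrite (_ : 2 + x%:Z = (x.+2)%:Z) ?eqz_nat 1?eq_sym //. Qed.

Lemma sg_shift j k I J : j \in J -> k \notin J ->
  (-1) ^+ (ninv J [set k]) * sg j I (k |: J) = sg j I J * (-1) ^+ (ninv (J :\ j) [set k]) :> C.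
Proof.
move=> jJ kJ.
have jk : j != k by apply/eqP => ejk; move: kJ; rewrite -ejk jJ.
have kJj : k \notin J :\ j by rewrite inE negb_and kJ orbT.
have e1 : ninv (j |: (J :\ j)) [set k] = ((k < j) + ninv (J :\ j) [set k])%N by rewrite ninvU1l ?setD11.
rewrite (setD1K jJ) in e1; rewrite e1.
rewrite /sg setU1D1 // ninvU1r //.
rewrite -!exprD.
set x1 := ninv (J :\ j) [set k]; set x2 := #|I :\ j|; set x3 := ninv [set j] (I :\ j).
set x4 := ninv [set j] (J :\ j); set b := (k < j)%N.
rewrite -[X in _ = X](sign_even _ b); congr (_ ^+ _).
clearbody x1 x2 x3 x4 b; rewrite -!addnn -!plusE; lia.
Qed.

Lemma ex_out I J : (#|I| + #|J| < n)%N -> exists k, k \notin I :|: J.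
Proof.
move=> h; case: (pickP (fun k => k \notin I :|: J)) => [k hk|hn]; first by exists k.
have hs : [set: 'I_n] \subset I :|: J by apply/subsetP => x _; have := hn x; move/negbFE.
have := subset_leq_card hs; rewrite cardsT card_ord => h2.
have h3 := (leq_card_setU I J).1.
by move: (leq_trans h2 h3); rewrite leqNgt h.
Qed.

Lemma main_aux (p q : nat) (hq : (2 <= q)%N) (hpq : (p + q <= n)%N) (alpha : cform n C)
  (halpha : in_V p%:Z (q%:Z - 1) alpha)
  (H : forall phi : cform n C, in_V 0 1 phi ->
         exists beta : cform n C, in_V (p%:Z - 1) (q%:Z - 1) beta /\
           wedge alpha phi = wedge (omega n C) beta) :
  exists gamma : cform n C, in_V (p%:Z - 1) (q%:Z - 2) gamma /\
    alpha = wedge (omega n C) gamma.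
Proof.
have Hb : forall k, {beta : cform n C | wedge alpha (phik k) = wedge (omega n C) beta}.
  move=> k; apply: constructive_indefinite_description.
  by have [b [_ hb]] := H _ (@phik_in k); exists b.
pose beta k := sval (Hb k).
pose delta k X Y := (-1) ^+ (ninv Y [set k]) * beta k (X, k |: Y) : C.
have key : forall k I J, k \notin I -> k \notin J -> alpha (I, J) = 'i * Lop (delta k) I J.
  move=> k I J kI kJ.
  have := congr1 (fun f : cform n C => f (I, k |: J)) (svalP (Hb k)).
  rewrite /= wedge_phik // wedge_omega.
  have hII : I :&: (k |: J) = I :&: J.
    apply/setP => x; rewrite !inE; case: (x =P k) => [->|] //=; by rewrite (negbTE kI).
  rewrite /Lop hII => h.
  have hs : (-1) ^+ (ninv J [set k]) * (-1) ^+ (ninv J [set k]) = 1 :> C.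
    by rewrite -exprD addnn -signr_odd odd_double.
  rewrite -[alpha _]mul1r -hs -mulrA h mulrCA; congr (_ * _); rewrite mulr_sumr.
  apply: eq_bigr => j; rewrite inE => /andP[jI jJ].
  have jk : j != k by apply/eqP => ejk; move: kI; rewrite -ejk jI.
  by rewrite setU1D1 // mulrA sg_shift // -mulrA.
have cons : forall k k' X Y, (#|X|.+1 = p)%N -> (#|Y|.+2 = q)%N ->
    k \notin X :|: Y -> k' \notin X :|: Y -> delta k X Y = delta k' X Y.
  move=> k k' X Y hX hY hk hk'.
  pose e (U V : {set 'I_n}) := if (#|U| == #|X|) && (#|V| == #|Y|) then delta k U V - delta k' U V else (0 : C).
  have hav : avoid [set k; k'] X Y.
    move=> x; rewrite !inE => /orP[] /eqP ->; by move: hk hk'; rewrite !inE !negb_or.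
  have hdeg : (#|X| + #|Y| + 1 + #|[set k; k']| <= n)%N.
    have hK : (#|[set k; k']| <= 2)%N.
      by rewrite cardsU1 cards1; case: (k \notin [set k']).
    apply: leq_trans (_ : (#|X| + #|Y| + 1 + 2 <= n)%N); first by rewrite leq_add2l.
    move: hpq; rewrite -hX -hY; set x := #|X|; set y := #|Y|; clearbody x y; rewrite -!plusE => h0; apply/ssrnat.leP; move/ssrnat.leP: h0; lia.
  have hsupp : forall U V, e U V != 0 -> #|U| = #|X| /\ #|V| = #|Y|.
    by move=> U V; rewrite /e; case: ifP => [/andP[/eqP -> /eqP ->] //|]; rewrite eqxx.
  suff hL : forall U V, avoid [set k; k'] U V -> Lop e U V = 0.
    have := @lef _ _ _ e hdeg hsupp hL X Y hav; rewrite /e !eqxx /=.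
    by move/eqP; rewrite subr_eq0 => /eqP.
  move=> U V havUV.
  have kU : k \notin U by have := havUV k; rewrite !inE eqxx => /(_ isT) /andP[].
  have kV : k \notin V by have := havUV k; rewrite !inE eqxx => /(_ isT) /andP[].
  have k'U : k' \notin U by have := havUV k'; rewrite !inE eqxx orbT => /(_ isT) /andP[].
  have k'V : k' \notin V by have := havUV k'; rewrite !inE eqxx orbT => /(_ isT) /andP[].
  rewrite /Lop; case hc: ((#|U| == #|X|.+1) && (#|V| == #|Y|.+1)).
    rewrite (eq_bigr (fun j => sg j U V * delta k (U :\ j) (V :\ j) - sg j U V * delta k' (U :\ j) (V :\ j))).
      rewrite sumrB; apply/eqP; rewrite subr_eq0; apply/eqP.
      apply: (mulfI (neq0Ci C)).
      by rewrite -/(Lop _ _ _) -/(Lop _ _ _) -key // -key.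
    move=> j; rewrite inE => /andP[jU jV]; rewrite /e -mulrBr.
    move: hc; rewrite (cardsD1 j U) (cardsD1 j V) jU jV !add1n !eqSS => -> //.
  apply: big1 => j; rewrite inE => /andP[jU jV]; rewrite /e.
  move: hc; rewrite (cardsD1 j U) (cardsD1 j V) jU jV !add1n !eqSS => ->.
  by rewrite mulr0.
pose gamma : cform n C := [ffun IJ : {set 'I_n} * {set 'I_n} =>
  if (#|IJ.1|%:Z == p%:Z - 1) && (#|IJ.2|%:Z == q%:Z - 2) then
    (if [pick k | k \notin IJ.1 :|: IJ.2] is Some k then delta k IJ.1 IJ.2 else 0) else 0].
exists gamma; split.
  move=> I J; rewrite ffunE /=; case: ifP => [/andP[/eqP -> /eqP ->] //|]; by rewrite eqxx.
apply/ffunP => -[I J]; rewrite wedge_omega.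
case hd: ((#|I| == p) && (#|J|.+1 == q)).
  move/andP: hd => [/eqP hI /eqP hJ].
  have [k0 hk0] : exists k0, k0 \notin I :|: J.
    apply: ex_out; rewrite hI; move: hpq; rewrite -hJ; set y := #|J|; clearbody y.
    rewrite -!plusE => h0; apply/ssrnat.ltP; move/ssrnat.leP: h0; lia.
  move: (hk0); rewrite inE negb_or => /andP[k0I k0J].
  rewrite (key k0 I J k0I k0J); congr (_ * _); apply: eq_bigr => j; rewrite inE => /andP[jI jJ].
  congr (_ * _); rewrite ffunE /= zsub1 zsub2.
  have hIj : (#|I :\ j|.+1 = #|I|)%N by rewrite (cardsD1 j I) jI.
  have hJj : (#|J :\ j|.+1 = #|J|)%N by rewrite (cardsD1 j J) jJ.
  have hk0' : k0 \notin (I :\ j) :|: (J :\ j).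
    by rewrite !inE !negb_or !negb_and k0I k0J !orbT.
  rewrite hIj hI hJj hJ !eqxx /=.
  case: pickP => [k' hk' | hn]; last by have := hn k0; rewrite hk0'.
  by apply: cons => //; rewrite ?hIj ?hJj.
have -> : alpha (I, J) = 0.
  apply/eqP; apply/negPn/negP => /halpha [h1 h2].
  move: hd; move/eqP: h2; rewrite zsub1 => /eqP ->.
  by move/eqP: h1; rewrite eqz_nat => /eqP ->; rewrite !eqxx.
rewrite /Lop big1 ?mulr0 // => j; rewrite inE => /andP[jI jJ].
rewrite ffunE /= zsub1 zsub2.
have hIj : (#|I :\ j|.+1 = #|I|)%N by rewrite (cardsD1 j I) jI.
have hJj : (#|J :\ j|.+1 = #|J|)%N by rewrite (cardsD1 j J) jJ.
by rewrite hIj hJj hd mulr0.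
Qed.


End S.

Unset Implicit Arguments.

Theorem lemma2p4 (C : numClosedFieldType) (n p q : nat)
  (hq : (2 <= q)%N) (hpq : (p + q <= n)%N) (alpha : cform n C)
  (halpha : in_V p%:Z (q%:Z - 1) alpha)
  (H : forall phi : cform n C, in_V 0 1 phi ->
         exists beta : cform n C, in_V (p%:Z - 1) (q%:Z - 1) beta /\
           wedge alpha phi = wedge (omega n C) beta) :
  exists gamma : cform n C, in_V (p%:Z - 1) (q%:Z - 2) gamma /\
    alpha = wedge (omega n C) gamma.
Proof. exact: (@main_aux C n p q hq hpq alpha halpha H). Qed.
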